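(* Let $J\subseteq\mathbb{R}$ be an interval, $f:J\to\mathbb{R}$ convex, $a,b\in J$, $\nu\in[0,1]$, $r=\min\{\nu,1-\nu\}$, $R=\max\{\nu,1-\nu\}$, and $$\Phi_f(\nu):=\int_0^1\left(\frac{f\big(a\nabla_{\nu\lambda}b\big)+f\big(b\nabla_{(1-\nu)\lambda}a\big)}{2}-f\Big(a\nabla_{\frac{1+\lambda(2\nu-1)}{2}}b\Big)\right)d\lambda,\qquad \Delta_f:=\frac{f(a)+f(b)}{2}-f\Big(\frac{a+b}{2}\Big).$$ Then $$2\big(r\,\Phi_f(\nu)+\widetilde r(\nu)\,\Delta_f\big)\le f(a)\nabla_\nu f(b)-f\big(a\nabla_\nu b\big)\le 2\big(R\,\Phi_f(\nu)+\widetilde R(\nu)\,\Delta_f\big).$$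
   Context: For real $x,y$ and $\mu\in[0,1]$, $x\nabla_\mu y:=(1-\mu)x+\mu y$. For $\lambda\in[0,1]$ let $r_1(\lambda)=\min\{\nu\lambda,1-\nu\lambda\}$, $r_2(\lambda)=\min\{(1-\nu)\lambda,1-(1-\nu)\lambda\}$, $R_1(\lambda)=\max\{\nu\lambda,1-\nu\lambda\}$, $R_2(\lambda)=\max\{(1-\nu)\lambda,1-(1-\nu)\lambda\}$, and $\widetilde r(\nu):=\int_0^1((1-\nu)r_1(\lambda)+\nu r_2(\lambda))d\lambda$, $\widetilde R(\nu):=\int_0^1((1-\nu)R_1(\lambda)+\nu R_2(\lambda))d\lambda$. *)

(* Defs.v *)
From Stdlib Require Import Reals.
From Coquelicot Require Import Coquelicot.
Open Scope R_scope.

Definition nabla (x y mu : R) : R := (1 - mu) * x + mu * y.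

Definition is_interval (J : R -> Prop) : Prop :=
  forall x y z, J x -> J z -> x <= y <= z -> J y.

Definition convex_on (J : R -> Prop) (f : R -> R) : Prop :=
  forall x y t, J x -> J y -> 0 <= t <= 1 ->
    f (nabla x y t) <= nabla (f x) (f y) t.

Definition r1 (nu lam : R) : R := Rmin (nu * lam) (1 - nu * lam).
Definition r2 (nu lam : R) : R := Rmin ((1 - nu) * lam) (1 - (1 - nu) * lam).
Definition R1 (nu lam : R) : R := Rmax (nu * lam) (1 - nu * lam).
Definition R2 (nu lam : R) : R := Rmax ((1 - nu) * lam) (1 - (1 - nu) * lam).

Definition rtilde (nu : R) : R :=
  RInt (fun lam => (1 - nu) * r1 nu lam + nu * r2 nu lam) 0 1.
Definition Rtilde (nu : R) : R :=
  RInt (fun lam => (1 - nu) * R1 nu lam + nu * R2 nu lam) 0 1.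

Definition Phi_f (f : R -> R) (a b nu : R) : R :=
  RInt (fun lam =>
    (f (nabla a b (nu * lam)) + f (nabla b a ((1 - nu) * lam))) / 2
    - f (nabla a b ((1 + lam * (2 * nu - 1)) / 2))) 0 1.

Definition Delta_f (f : R -> R) (a b : R) : R :=
  (f a + f b) / 2 - f ((a + b) / 2).

(* Main.v *)
Require Import Defs.
From Stdlib Require Import Reals Lra Psatz Lia RList Ranalysis RiemannInt_SF RiemannInt.
From Coquelicot Require Import Coquelicot.
Open Scope R_scope.
Lemma J_nabla J x y t : is_interval J -> J x -> J y -> 0 <= t <= 1 -> J (nabla x y t).
Proof.
  intros HJ Hx Hy Ht. unfold nabla.
  destruct (Rle_dec x y).
  - apply (HJ x _ y Hx Hy). split; nra.
  - apply (HJ y _ x Hy Hx). split; nra.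
Qed.

Lemma two_half J f x y t : is_interval J -> convex_on J f -> J x -> J y -> 0 <= t <= 1/2 ->
  2 * t * ((f x + f y)/2 - f ((x+y)/2)) <= nabla (f x) (f y) t - f (nabla x y t)
  <= 2 * (1 - t) * ((f x + f y)/2 - f ((x+y)/2)).
Proof.
  intros HJ Hc Hx Hy Ht.
  assert (Hm : J ((x+y)/2)).
  { replace ((x+y)/2) with (nabla x y (1/2)) by (unfold nabla; field). apply J_nabla; auto; lra. }
  assert (Hp : J (nabla x y t)) by (apply J_nabla; auto; lra).
  split.
  - assert (H := Hc x ((x+y)/2) (2*t) Hx Hm ltac:(lra)).
    replace (nabla x ((x + y) / 2) (2 * t)) with (nabla x y t) in H by (unfold nabla; field).
    unfold nabla in *. lra.
  - set (al := (1 - 2*t)/(2*(1-t))).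
    assert (Hal : 0 <= al <= 1).
    { unfold al. split.
      - apply Rmult_le_pos; [lra|]. apply Rlt_le, Rinv_0_lt_compat; lra.
      - apply Rmult_le_reg_r with (2*(1-t)); [lra|].
        unfold Rdiv. rewrite Rmult_assoc, Rinv_l by lra. lra. }
    assert (H := Hc (nabla x y t) y al Hp Hy Hal).
    replace (nabla (nabla x y t) y al) with ((x+y)/2) in H
      by (unfold nabla, al; field; lra).
    assert (E : 2*(1-t)*al = 1 - 2*t) by (unfold al; field; lra).
    assert (H2 := Rmult_le_compat_l (2*(1-t)) _ _ ltac:(lra) H).
    assert (H3 : 2 * (1 - t) * nabla (f (nabla x y t)) (f y) al
                 = f (nabla x y t) + (1 - 2*t) * f y) by (unfold nabla, al; field; lra).
    rewrite H3 in H2. unfold nabla at 1. lra.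
Qed.

Lemma two_point J f x y t : is_interval J -> convex_on J f -> J x -> J y -> 0 <= t <= 1 ->
  2 * Rmin t (1-t) * ((f x + f y)/2 - f ((x+y)/2)) <= nabla (f x) (f y) t - f (nabla x y t)
  <= 2 * Rmax t (1-t) * ((f x + f y)/2 - f ((x+y)/2)).
Proof.
  intros HJ Hc Hx Hy Ht.
  destruct (Rle_dec t (1/2)).
  - rewrite Rmin_left by lra. rewrite Rmax_right by lra. apply two_half with J; auto; lra.
  - rewrite Rmin_right by lra. rewrite Rmax_left by lra.
    assert (H := two_half J f y x (1-t) HJ Hc Hy Hx ltac:(lra)).
    replace (nabla y x (1-t)) with (nabla x y t) in H by (unfold nabla; ring).
    replace ((y+x)/2) with ((x+y)/2) in H by (field).
    unfold nabla in *. replace (1 - (1-t)) with t in H by ring. lra.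
Qed.

Definition phiI (f : R -> R) (a b nu : R) (lam : R) : R :=
    (f (nabla a b (nu * lam)) + f (nabla b a ((1 - nu) * lam))) / 2
    - f (nabla a b ((1 + lam * (2 * nu - 1)) / 2)).

Lemma pointwise J f a b nu lam : is_interval J -> convex_on J f -> J a -> J b -> 0 <= nu <= 1 ->
  0 <= lam <= 1 ->
  2 * (Rmin nu (1 - nu) * phiI f a b nu lam + ((1-nu) * r1 nu lam + nu * r2 nu lam) * Delta_f f a b)
    <= nabla (f a) (f b) nu - f (nabla a b nu)
  /\ nabla (f a) (f b) nu - f (nabla a b nu)
    <= 2 * (Rmax nu (1 - nu) * phiI f a b nu lam + ((1-nu) * Defs.R1 nu lam + nu * R2 nu lam) * Delta_f f a b).
Proof.
  intros HJ Hc Ha Hb Hnu Hl.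
  set (P := nabla a b (nu * lam)).
  set (Q := nabla a b (1 - (1 - nu) * lam)).
  assert (HP : J P) by (apply J_nabla; auto; nra).
  assert (HQ : J Q) by (apply J_nabla; auto; nra).
  assert (E1 : f (nabla b a ((1 - nu) * lam)) = f Q) by (unfold Q; f_equal; unfold nabla; ring).
  assert (E2 : f (nabla a b ((1 + lam * (2 * nu - 1)) / 2)) = f ((P + Q)/2))
    by (unfold P, Q; f_equal; unfold nabla; field).
  assert (E3 : f (nabla a b nu) = f (nabla P Q nu)) by (unfold P, Q; f_equal; unfold nabla; ring).
  assert (A1 := two_point J f a b (nu * lam) HJ Hc Ha Hb ltac:(nra)).
  assert (A2 := two_point J f b a ((1 - nu) * lam) HJ Hc Hb Ha ltac:(nra)).
  assert (A3 := two_point J f P Q nu HJ Hc HP HQ Hnu).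
  fold P in A1. rewrite E1 in A2.
  replace ((f b + f a)/2 - f ((b+a)/2)) with (Delta_f f a b) in A2
    by (unfold Delta_f; rewrite (Rplus_comm b a); field).
  fold (Delta_f f a b) in A1.
  unfold phiI. fold P. rewrite E1, E2, E3.
  unfold r1, r2, Defs.R1, R2.
  set (D := Delta_f f a b) in *.
  set (ph := (f P + f Q) / 2 - f ((P + Q) / 2)) in *.
  set (e1 := nabla (f a) (f b) (nu * lam) - f P) in *.
  set (e2 := nabla (f b) (f a) ((1 - nu) * lam) - f Q) in *.
  set (e3 := nabla (f P) (f Q) nu - f (nabla P Q nu)) in *.
  assert (L : nabla (f a) (f b) nu - f (nabla P Q nu) = (1-nu)*e1 + nu*e2 + e3)
    by (unfold e1, e2, e3, nabla; ring).
  rewrite L.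
  destruct A1 as [A1l A1u]. destruct A2 as [A2l A2u]. destruct A3 as [A3l A3u].
  assert (B1 := Rmult_le_compat_l (1-nu) _ _ ltac:(lra) A1l).
  assert (B2 := Rmult_le_compat_l nu _ _ ltac:(lra) A2l).
  assert (C1 := Rmult_le_compat_l (1-nu) _ _ ltac:(lra) A1u).
  assert (C2 := Rmult_le_compat_l nu _ _ ltac:(lra) A2u).
  split; lra.
Qed.

Definition cvx01 (K : R -> R) := forall u v s, 0 <= u <= 1 -> 0 <= v <= 1 -> 0 <= s <= 1 ->
  K ((1-s)*u + s*v) <= (1-s) * K u + s * K v.

Lemma K_of_f J f x y : is_interval J -> convex_on J f -> J x -> J y ->
  cvx01 (fun t => f (nabla x y t)).
Proof.
  intros HJ Hc Hx Hy u v s Hu Hv Hs.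
  replace (nabla x y ((1 - s) * u + s * v)) with (nabla (nabla x y u) (nabla x y v) s)
    by (unfold nabla; ring).
  apply Hc; auto; apply J_nabla; auto.
Qed.

Lemma cvx_bound K : cvx01 K -> forall t, 0 <= t <= 1 ->
  Rabs (K t) <= Rabs (K 0) + Rabs (K 1) + 2 * Rabs (K (1/2)).
Proof.
  intros Hc t Ht.
  assert (H1 := Hc 0 1 t ltac:(lra) ltac:(lra) Ht).
  replace ((1 - t) * 0 + t * 1) with t in H1 by ring.
  assert (H2 := Hc t (1-t) (1/2) Ht ltac:(lra) ltac:(lra)).
  replace ((1 - 1/2) * t + 1/2 * (1 - t)) with (1/2) in H2 by field.
  assert (H3 := Hc 0 1 (1-t) ltac:(lra) ltac:(lra) ltac:(lra)).
  replace ((1 - (1-t)) * 0 + (1-t) * 1) with (1-t) in H3 by ring.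
  assert (a0 := Rabs_pos (K 0)). assert (a1 := Rabs_pos (K 1)).
  assert (b0 := Rle_abs (K 0)). assert (b1 := Rle_abs (K 1)).
  assert (c0 := Rabs_maj2 (K 0)). assert (c1 := Rabs_maj2 (K 1)).
  assert (d0 := Rabs_maj2 (K (1/2))).
  assert (e1 : (1-t) * K 0 <= Rabs (K 0)).
  { apply Rle_trans with ((1-t) * Rabs (K 0)). apply Rmult_le_compat_l; lra. nra. }
  assert (e2 : t * K 1 <= Rabs (K 1)).
  { apply Rle_trans with (t * Rabs (K 1)). apply Rmult_le_compat_l; lra. nra. }
  assert (e3 : (1-(1-t)) * K 0 <= Rabs (K 0)).
  { apply Rle_trans with ((1-(1-t)) * Rabs (K 0)). apply Rmult_le_compat_l; lra. nra. }
  assert (e4 : (1-t) * K 1 <= Rabs (K 1)).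
  { apply Rle_trans with ((1-t) * Rabs (K 1)). apply Rmult_le_compat_l; lra. nra. }
  assert (a2 := Rabs_pos (K (1/2))). apply Rabs_le. split; lra.
Qed.

Lemma cvx_lip K B : cvx01 K -> (forall t, 0 <= t <= 1 -> Rabs (K t) <= B) ->
  forall t0 d t, 0 < d -> 0 <= t0 - d -> t0 + d <= 1 -> Rabs (t - t0) <= d ->
  Rabs (K t - K t0) * d <= 2 * B * Rabs (t - t0).
Proof.
  intros Hc HB t0 d t Hd H0 H1 Ht.
  assert (Bt0 := HB t0 ltac:(lra)).
  assert (Bp := HB (t0 + d) ltac:(lra)).
  assert (Bm := HB (t0 - d) ltac:(lra)).
  apply Rabs_le_between in Ht.
  apply Rabs_le_between in Bt0. apply Rabs_le_between in Bp. apply Rabs_le_between in Bm.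
  destruct (Rle_dec t0 t).
  - set (h := t - t0).
    rewrite (Rabs_right h) by (unfold h; lra).
    assert (Hu := Hc t0 (t0 + d) (h/d) ltac:(lra) ltac:(lra)
                   ltac:(split; [apply Rmult_le_pos; [unfold h; lra | apply Rlt_le, Rinv_0_lt_compat; lra]
                                | apply Rmult_le_reg_r with d; [lra|]; unfold Rdiv; rewrite Rmult_assoc, Rinv_l by lra; unfold h; lra])).
    replace ((1 - h / d) * t0 + h / d * (t0 + d)) with t in Hu by (unfold h; field; lra).
    assert (Hu2 := Rmult_le_compat_l d _ _ ltac:(lra) Hu).
    replace (d * ((1 - h / d) * K t0 + h / d * K (t0 + d))) with ((d - h) * K t0 + h * K (t0 + d)) in Hu2
      by (field; lra).
    set (sg := h / (h + d)).
    assert (Hsg : 0 <= sg <= 1).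
    { unfold sg; split.
      - apply Rmult_le_pos; [unfold h; lra | apply Rlt_le, Rinv_0_lt_compat; unfold h; lra].
      - apply Rmult_le_reg_r with (h + d); [unfold h; lra|]. unfold Rdiv.
        rewrite Rmult_assoc, Rinv_l by (unfold h; lra). unfold h; lra. }
    assert (Hl := Hc t (t0 - d) sg ltac:(lra) ltac:(lra) Hsg).
    replace ((1 - sg) * t + sg * (t0 - d)) with t0 in Hl by (unfold sg, h; field; lra).
    assert (Hl2 := Rmult_le_compat_l (h + d) _ _ ltac:(unfold h; lra) Hl).
    replace ((h + d) * ((1 - sg) * K t + sg * K (t0 - d))) with (d * K t + h * K (t0 - d)) in Hl2
      by (unfold sg; field; unfold h; lra).
    assert (0 <= h) by (unfold h; lra).
    apply Rle_trans with (Rabs (d * (K t - K t0))).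
    { rewrite Rabs_mult, (Rabs_right d) by lra. lra. }
    apply Rabs_le. split; nra.
  - set (h := t0 - t).
    replace (t - t0) with (- h) by (unfold h; ring).
    rewrite Rabs_Ropp, (Rabs_right h) by (unfold h; lra).
    assert (Hu := Hc t0 (t0 - d) (h/d) ltac:(lra) ltac:(lra)
                   ltac:(split; [apply Rmult_le_pos; [unfold h; lra | apply Rlt_le, Rinv_0_lt_compat; lra]
                                | apply Rmult_le_reg_r with d; [lra|]; unfold Rdiv; rewrite Rmult_assoc, Rinv_l by lra; unfold h; lra])).
    replace ((1 - h / d) * t0 + h / d * (t0 - d)) with t in Hu by (unfold h; field; lra).
    assert (Hu2 := Rmult_le_compat_l d _ _ ltac:(lra) Hu).
    replace (d * ((1 - h / d) * K t0 + h / d * K (t0 - d))) with ((d - h) * K t0 + h * K (t0 - d)) in Hu2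
      by (field; lra).
    set (sg := h / (h + d)).
    assert (Hsg : 0 <= sg <= 1).
    { unfold sg; split.
      - apply Rmult_le_pos; [unfold h; lra | apply Rlt_le, Rinv_0_lt_compat; unfold h; lra].
      - apply Rmult_le_reg_r with (h + d); [unfold h; lra|]. unfold Rdiv.
        rewrite Rmult_assoc, Rinv_l by (unfold h; lra). unfold h; lra. }
    assert (Hl := Hc t (t0 + d) sg ltac:(lra) ltac:(lra) Hsg).
    replace ((1 - sg) * t + sg * (t0 + d)) with t0 in Hl by (unfold sg, h; field; lra).
    assert (Hl2 := Rmult_le_compat_l (h + d) _ _ ltac:(unfold h; lra) Hl).
    replace ((h + d) * ((1 - sg) * K t + sg * K (t0 + d))) with (d * K t + h * K (t0 + d)) in Hl2
      by (unfold sg; field; unfold h; lra).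
    assert (0 <= h) by (unfold h; lra).
    apply Rle_trans with (Rabs (d * (K t - K t0))).
    { rewrite Rabs_mult, (Rabs_right d) by lra. lra. }
    apply Rabs_le. split; nra.
Qed.

Lemma loclip_cont h x d C : 0 < d -> 0 <= C ->
  (forall y, Rabs (y - x) < d -> Rabs (h y - h x) <= C * Rabs (y - x)) -> continuity_pt h x.
Proof.
  intros Hd HC H. unfold continuity_pt, continue_in, limit1_in, limit_in.
  intros eps Heps. exists (Rmin d (eps / (C + 1))). split.
  - apply Rmin_pos; [lra|]. apply Rdiv_lt_0_compat; lra.
  - intros y [_ Hy]. simpl in *. unfold R_dist in *.
    assert (Hy1 : Rabs (y - x) < d) by (eapply Rlt_le_trans; [exact Hy | apply Rmin_l]).
    assert (Hy2 : Rabs (y - x) < eps / (C + 1)) by (eapply Rlt_le_trans; [exact Hy | apply Rmin_r]).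
    assert (Hh := H y Hy1).
    assert (Hy3 : Rabs (y - x) * (C + 1) < eps).
    { apply Rmult_lt_reg_r with (/ (C+1)). apply Rinv_0_lt_compat; lra.
      rewrite Rmult_assoc, Rinv_r by lra. lra. }
    assert (0 <= Rabs (y - x)) by apply Rabs_pos. nra.
Qed.

Definition cl (d t : R) := Rmax d (Rmin (1 - d) t).

Lemma cl_lip d t t0 : d <= 1 - d -> Rabs (cl d t - cl d t0) <= Rabs (t - t0).
Proof.
  intros H. unfold cl, Rmax, Rmin.
  repeat destruct Rle_dec; unfold Rabs; repeat destruct Rcase_abs; lra.
Qed.

Lemma cl_range d t : d <= 1 - d -> d <= cl d t <= 1 - d.
Proof. intros H. unfold cl, Rmax, Rmin. repeat destruct Rle_dec; lra. Qed.

Lemma cl_id d t : d <= t <= 1 - d -> cl d t = t.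
Proof. intros H. unfold cl, Rmax, Rmin. repeat destruct Rle_dec; lra. Qed.

Definition kf (d M t : R) : R :=
  if Rle_dec d t then (if Rle_dec t (1 - d) then 0 else M) else M.

Lemma kf_adapted d M : 0 < d < 1/2 ->
  adapted_couple (kf d M) 0 1 (0 :: d :: (1 - d) :: 1 :: nil)%list (M :: 0 :: M :: nil)%list.
Proof.
  intros Hd. unfold adapted_couple. repeat split.
  - unfold ordered_Rlist. intros i Hi. simpl in Hi.
    destruct i as [|[|[|i]]]; simpl; try lra; lia.
  - simpl. rewrite Rmin_left; lra.
  - simpl. rewrite Rmax_right; lra.
  - intros i Hi. simpl in Hi. unfold constant_D_eq, open_interval.
    destruct i as [|[|[|i]]]; simpl; intros x Hx; unfold kf;
      repeat destruct Rle_dec; try lra; lia.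
Qed.

Definition kstep (d M : R) (H : 0 < d < 1/2) : StepFun 0 1 :=
  mkStepFun (existT _ (0 :: d :: (1 - d) :: 1 :: nil)%list
    (existT _ (M :: 0 :: M :: nil)%list (kf_adapted d M H))).

Lemma kstep_int d M H : RiemannInt_SF (kstep d M H) = 2 * M * d.
Proof.
  unfold RiemannInt_SF, subdivision, subdivision_val, kstep. simpl.
  destruct Rle_dec; [|lra]. simpl. ring.
Qed.

Lemma cvx_RI K : cvx01 K -> Riemann_integrable K 0 1.
Proof.
  intros Hc eps.
  set (B := Rabs (K 0) + Rabs (K 1) + 2 * Rabs (K (1/2)) + 1).
  assert (HB : forall t, 0 <= t <= 1 -> Rabs (K t) <= B).
  { intros t Ht. assert (H := cvx_bound K Hc t Ht). unfold B. lra. }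
  assert (Bpos : 0 < B).
  { unfold B. assert (H1 := Rabs_pos (K 0)). assert (H2 := Rabs_pos (K 1)).
    assert (H3 := Rabs_pos (K (1/2))). lra. }
  assert (He := cond_pos eps).
  set (d := Rmin (1/4) (eps / (8 * B))).
  assert (Hd : 0 < d < 1/2).
  { unfold d. split. apply Rmin_pos; [lra|]. apply Rdiv_lt_0_compat; lra.
    eapply Rle_lt_trans; [apply Rmin_l | lra]. }
  assert (Hd2 : d <= eps / (8 * B)) by apply Rmin_r.
  set (g := fun t => K (cl d t)).
  assert (Rg : Riemann_integrable g 0 1).
  { apply continuity_implies_RiemannInt; [lra|].
    intros x _. apply loclip_cont with d (2 * B / d); [lra | apply Rdiv_le_0_compat; lra |].
    intros y Hy. unfold g.
    assert (Hr := cl_range d x ltac:(lra)).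
    assert (Hl := cl_lip d y x ltac:(lra)).
    assert (H := cvx_lip K B Hc HB (cl d x) d (cl d y) ltac:(lra) ltac:(lra) ltac:(lra) ltac:(lra)).
    apply Rmult_le_reg_r with d; [lra|].
    apply Rle_trans with (2 * B * Rabs (cl d y - cl d x)); [exact H|].
    replace (2 * B / d * Rabs (y - x) * d) with (2 * B * Rabs (y - x)) by (field; lra).
    apply Rmult_le_compat_l; lra. }
  assert (He2 : 0 < eps / 2) by lra.
  destruct (Rg (mkposreal _ He2)) as [phi [psi [H1 H2]]].
  exists phi. exists (mkStepFun (StepFun_P28 1 psi (kstep d (2 * B) Hd))). split.
  - intros t Ht. rewrite Rmin_left, Rmax_right in Ht by lra. simpl.
    assert (Ht' : Rmin 0 1 <= t <= Rmax 0 1) by (rewrite Rmin_left, Rmax_right; lra).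
    assert (H3 := H1 t Ht').
    assert (H4 : Rabs (K t - g t) <= kf d (2 * B) t).
    { unfold kf, g. destruct Rle_dec; [destruct Rle_dec|].
      - rewrite cl_id by lra. rewrite Rminus_diag, Rabs_R0. lra.
      - unfold Rminus. eapply Rle_trans; [apply Rabs_triang|]. rewrite Rabs_Ropp.
        assert (Hr := cl_range d t ltac:(lra)).
        assert (Ha := HB t Ht). assert (Hb := HB (cl d t) ltac:(lra)). lra.
      - unfold Rminus. eapply Rle_trans; [apply Rabs_triang|]. rewrite Rabs_Ropp.
        assert (Hr := cl_range d t ltac:(lra)).
        assert (Ha := HB t Ht). assert (Hb := HB (cl d t) ltac:(lra)). lra. }
    replace (K t - phi t) with ((K t - g t) + (g t - phi t)) by ring.
    eapply Rle_trans; [apply Rabs_triang|]. simpl. lra.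
  - rewrite StepFun_P30, kstep_int. simpl in H2.
    eapply Rle_lt_trans; [apply Rabs_triang|].
    assert (E : B * d <= eps / 8).
    { apply Rle_trans with (B * (eps / (8 * B))). apply Rmult_le_compat_l; lra.
      right. field. lra. }
    rewrite (Rabs_right (1 * (2 * (2 * B) * d))) by nra. lra.
Qed.

Lemma cvx_ex_RInt K : cvx01 K -> ex_RInt K 0 1.
Proof. intros H. apply ex_RInt_Reals_1. apply cvx_RI; auto. Qed.

Lemma ex_RInt_sub (K : R -> R) c d : ex_RInt K 0 1 -> 0 <= c <= 1 -> 0 <= d <= 1 -> ex_RInt K c d.
Proof.
  intros H Hc Hd.
  assert (G : forall c d, 0 <= c <= d -> d <= 1 -> ex_RInt K c d).
  { intros c' d' H1 H2. apply (ex_RInt_Chasles_2 K 0 c' d'); [lra|].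
    apply (ex_RInt_Chasles_1 K 0 d' 1); [lra|exact H]. }
  destruct (Rle_dec c d).
  - apply G; lra.
  - apply ex_RInt_swap. apply G; lra.
Qed.

Lemma ex_RInt_aff (K : R -> R) u v : ex_RInt K 0 1 -> 0 <= v <= 1 -> 0 <= u + v <= 1 ->
  ex_RInt (fun y => K (u * y + v)) 0 1.
Proof.
  intros H Hv Huv.
  destruct (Req_dec u 0) as [Hu|Hu].
  - apply ex_RInt_ext with (fun _ => K v).
    { intros x _. subst u. f_equal. ring. }
    apply ex_RInt_const.
  - assert (Hs : ex_RInt K (u*0+v) (u*1+v)).
    { apply ex_RInt_sub; auto; [replace (u*0+v) with v by ring | replace (u*1+v) with (u+v) by ring]; lra. }
    assert (H1 := ex_RInt_comp_lin K u v 0 1 Hs).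
    assert (H2 := ex_RInt_scal _ _ _ (/ u) H1).
    apply ex_RInt_ext with (2 := H2).
    intros x _. change (/ u * (u * K (u * x + v)) = K (u * x + v)). field. exact Hu.
Qed.


Lemma exR_plus (f g : R -> R) a b : ex_RInt f a b -> ex_RInt g a b -> ex_RInt (fun x => f x + g x) a b.
Proof. intros. exact (ex_RInt_plus f g a b H H0). Qed.
Lemma exR_minus (f g : R -> R) a b : ex_RInt f a b -> ex_RInt g a b -> ex_RInt (fun x => f x - g x) a b.
Proof. intros. exact (ex_RInt_minus f g a b H H0). Qed.
Lemma exR_scal (f : R -> R) a b k : ex_RInt f a b -> ex_RInt (fun x => k * f x) a b.
Proof. intros. exact (ex_RInt_scal f a b k H). Qed.
Lemma isR_plus (f g : R -> R) a b I1 I2 : is_RInt f a b I1 -> is_RInt g a b I2 ->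
  is_RInt (fun x => f x + g x) a b (I1 + I2).
Proof. intros. exact (is_RInt_plus f g a b I1 I2 H H0). Qed.
Lemma isR_scal (f : R -> R) a b k I : is_RInt f a b I -> is_RInt (fun x => k * f x) a b (k * I).
Proof. intros. exact (is_RInt_scal f a b k I H). Qed.

Lemma Rmin_lip a b c d e : Rabs (a - c) <= e -> Rabs (b - d) <= e -> Rabs (Rmin a b - Rmin c d) <= e.
Proof. unfold Rmin. repeat destruct Rle_dec; unfold Rabs; repeat destruct Rcase_abs; lra. Qed.
Lemma Rmax_lip a b c d e : Rabs (a - c) <= e -> Rabs (b - d) <= e -> Rabs (Rmax a b - Rmax c d) <= e.
Proof. unfold Rmax. repeat destruct Rle_dec; unfold Rabs; repeat destruct Rcase_abs; lra. Qed.

Lemma lin_lip1 c x y : 0 <= c <= 1 -> Rabs (c * y - c * x) <= Rabs (y - x).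
Proof. intros. rewrite <- Rmult_minus_distr_l, Rabs_mult, (Rabs_right c) by lra.
  assert (0 <= Rabs (y - x)) by apply Rabs_pos. nra. Qed.
Lemma lin_lip2 c x y : 0 <= c <= 1 -> Rabs ((1 - c * y) - (1 - c * x)) <= Rabs (y - x).
Proof. intros. replace ((1 - c * y) - (1 - c * x)) with (- (c * y - c * x)) by ring.
  rewrite Rabs_Ropp. apply lin_lip1; auto. Qed.

Lemma w_int (g1 g2 : R -> R) nu : 0 <= nu <= 1 ->
  (forall x y, Rabs (g1 y - g1 x) <= Rabs (y - x)) ->
  (forall x y, Rabs (g2 y - g2 x) <= Rabs (y - x)) ->
  ex_RInt (fun l => (1 - nu) * g1 l + nu * g2 l) 0 1.
Proof.
  intros Hnu H1 H2. apply ex_RInt_Reals_1. apply continuity_implies_RiemannInt; [lra|].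
  intros x _. apply loclip_cont with 1 1; [lra|lra|].
  intros y _.
  replace ((1 - nu) * g1 y + nu * g2 y - ((1 - nu) * g1 x + nu * g2 x))
    with ((1 - nu) * (g1 y - g1 x) + nu * (g2 y - g2 x)) by ring.
  eapply Rle_trans; [apply Rabs_triang|]. rewrite !Rabs_mult, (Rabs_right (1-nu)), (Rabs_right nu) by lra.
  assert (A := H1 x y). assert (B := H2 x y). nra.
Qed.

Theorem corollary2p21 (J : R -> Prop) (f : R -> R) (a b nu : R) :
  is_interval J -> convex_on J f -> J a -> J b -> 0 <= nu <= 1 ->
  2 * (Rmin nu (1 - nu) * Phi_f f a b nu + rtilde nu * Delta_f f a b)
    <= nabla (f a) (f b) nu - f (nabla a b nu)
  /\ nabla (f a) (f b) nu - f (nabla a b nu)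
    <= 2 * (Rmax nu (1 - nu) * Phi_f f a b nu + Rtilde nu * Delta_f f a b).
Proof.
  intros HJ Hc Ha Hb Hnu.
  set (K := fun t => f (nabla a b t)).
  assert (HK : ex_RInt K 0 1) by (apply cvx_ex_RInt; apply (K_of_f J); auto).
  assert (T1 := ex_RInt_aff K nu 0 HK ltac:(lra) ltac:(lra)).
  assert (T2 := ex_RInt_aff K (nu - 1) 1 HK ltac:(lra) ltac:(lra)).
  assert (T3 := ex_RInt_aff K ((2 * nu - 1)/2) (1/2) HK ltac:(lra) ltac:(lra)).
  assert (Hphi : ex_RInt (phiI f a b nu) 0 1).
  { apply ex_RInt_ext with (fun l => /2 * (K (nu * l + 0) + K ((nu - 1) * l + 1))
                                      - K ((2 * nu - 1) / 2 * l + 1/2)).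
    - intros x _. unfold phiI, K.
      replace (nabla a b (nu * x + 0)) with (nabla a b (nu * x)) by (f_equal; ring).
      replace (nabla a b ((nu - 1) * x + 1)) with (nabla b a ((1 - nu) * x)) by (unfold nabla; ring).
      replace (nabla a b ((2 * nu - 1) / 2 * x + 1 / 2)) with (nabla a b ((1 + x * (2 * nu - 1)) / 2))
        by (f_equal; field).
      match goal with |- ?x = ?y => change (@eq R x y) end; field.
    - apply exR_minus; [apply exR_scal; apply exR_plus|]; assumption. }
  assert (Iphi := RInt_correct _ _ _ Hphi).
  change (Phi_f f a b nu) with (RInt (phiI f a b nu) 0 1).
  set (Ph := RInt (phiI f a b nu) 0 1) in *.
  assert (Hw1 : ex_RInt (fun lam => (1 - nu) * r1 nu lam + nu * r2 nu lam) 0 1).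
  { apply w_int; auto; intros x y; unfold r1, r2; apply Rmin_lip;
      first [apply lin_lip1 | apply lin_lip2]; lra. }
  assert (Hw2 : ex_RInt (fun lam => (1 - nu) * Defs.R1 nu lam + nu * R2 nu lam) 0 1).
  { apply w_int; auto; intros x y; unfold Defs.R1, R2; apply Rmax_lip;
      first [apply lin_lip1 | apply lin_lip2]; lra. }
  assert (Iw1 := RInt_correct _ _ _ Hw1).
  assert (Iw2 := RInt_correct _ _ _ Hw2).
  change (RInt (fun lam => (1 - nu) * r1 nu lam + nu * r2 nu lam) 0 1) with (rtilde nu) in Iw1.
  change (RInt (fun lam => (1 - nu) * Defs.R1 nu lam + nu * R2 nu lam) 0 1) with (Rtilde nu) in Iw2.
  set (D := Delta_f f a b).
  set (L := nabla (f a) (f b) nu - f (nabla a b nu)).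
  assert (IL : is_RInt (fun _ => L) 0 1 L).
  { pose proof (is_RInt_const (V:=R_NormedModule) 0 1 L) as H.
    match type of H with is_RInt _ _ _ ?v => replace v with L in H end. exact H.
    unfold scal. simpl. unfold mult. simpl. ring. }
  split.
  - assert (I := isR_scal _ _ _ 2 _ (isR_plus _ _ _ _ _ _
                  (isR_scal _ _ _ (Rmin nu (1 - nu)) _ Iphi) (isR_scal _ _ _ D _ Iw1))).
    replace (2 * (Rmin nu (1 - nu) * Ph + rtilde nu * D))
      with (2 * (Rmin nu (1 - nu) * Ph + D * rtilde nu)) by ring.
    apply (is_RInt_le _ _ 0 1 _ _ ltac:(lra) I IL).
    intros x Hx. destruct (pointwise J f a b nu x HJ Hc Ha Hb Hnu ltac:(lra)) as [P1 _].
    fold D L in P1. lra.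
  - assert (I := isR_scal _ _ _ 2 _ (isR_plus _ _ _ _ _ _
                  (isR_scal _ _ _ (Rmax nu (1 - nu)) _ Iphi) (isR_scal _ _ _ D _ Iw2))).
    replace (2 * (Rmax nu (1 - nu) * Ph + Rtilde nu * D))
      with (2 * (Rmax nu (1 - nu) * Ph + D * Rtilde nu)) by ring.
    apply (is_RInt_le _ _ 0 1 _ _ ltac:(lra) IL I).
    intros x Hx. destruct (pointwise J f a b nu x HJ Hc Ha Hb Hnu ltac:(lra)) as [_ P2].
    fold D L in P2. lra.
Qed.
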